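(* Let $\mathbf{w}\in\Sigma^\omega$ be an infinite word with appearance constant $\mathbf{A}_\mathbf{w}<\infty$. Then $\mathbf{w}[0..n-1]$ has a string attractor of size $O(\mathbf{A}_\mathbf{w}\log n)$ (with an absolute implied constant).
   Context: $\Sigma$ is a finite alphabet; words are indexed from $0$. The appearance constant $\mathbf{A}_\mathbf{w}$ is the least constant $C$ (if any) such that for every $m\ge1$, every length-$m$ factor of $\mathbf{w}$ has an occurrence in the prefix of $\mathbf{w}$ of length at most $Cm$. A string attractor of a finite word $x=x[0..n-1]$ is a set $S\subseteq\{0,\ldots,n-1\}$ such that every nonempty factor of $x$ has an occurrence $x[p..q]$ with $p\le i\le q$ for some $i\in S$. *)

(* Defs.v *)
From mathcomp Require Import all_boot.
From Stdlib Require Import Reals.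

Set Implicit Arguments.
Unset Strict Implicit.
Unset Printing Implicit Defensive.

Definition same_factor (T : Type) (w : nat -> T) (i p len : nat) : Prop :=
  forall k, (k < len)%N -> w (i + k)%N = w (p + k)%N.

Definition appearance_bound (T : Type) (w : nat -> T) (C : R) : Prop :=
  forall (m i : nat), (0 < m)%N ->
    exists p : nat, same_factor w i p m /\ (INR (p + m) <= C * INR m)%R.

(* A is the appearance constant A_w of w: the least admissible bound
   (in particular A_w < oo). *)
Definition is_appearance_constant (T : Type) (w : nat -> T) (A : R) : Prop :=
  appearance_bound w A /\ forall C : R, appearance_bound w C -> (A <= C)%R.

Definition string_attractor (T : Type) (w : nat -> T) (n : nat)
    (S : {set 'I_n}) : Prop :=
  forall i len : nat, (0 < len)%N -> (i + len <= n)%N ->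
    exists p : nat, [/\ (p + len <= n)%N, same_factor w i p len &
      exists2 s : 'I_n, s \in S & (p <= s < p + len)%N].

(* Main.v *)
Require Import Defs.
From mathcomp Require Import all_boot.
From Stdlib Require Import Reals.
From mathcomp Require Import zify.
From Stdlib Require Import Lra ZArith.

Lemma INR_addn a b : INR (a + b)%nat = (INR a + INR b)%R.
Proof. rewrite -plus_INR; congr INR; lia. Qed.
Lemma INR_muln a b : INR (a * b)%nat = (INR a * INR b)%R.
Proof. rewrite -mult_INR; congr INR; lia. Qed.
Lemma INR_expn a b : INR (expn a b) = (INR a ^ b)%R.
Proof. elim: b => [|b IH] //. by rewrite expnS INR_muln IH. Qed.
Lemma INR_leq (m : nat) b : (m <= b)%nat -> (INR m <= INR b)%R.
Proof. move=> h; apply: le_INR; apply/leP. exact h. Qed.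
Lemma INR_ltn a b : (INR a < INR b)%R -> (a < b)%nat.
Proof. move=> h; apply/ltP; exact: INR_lt. Qed.

Lemma ln_le' x y : (0 < x)%R -> (x <= y)%R -> (ln x <= ln y)%R.
Proof.
move=> hx hxy; case: (Rle_lt_or_eq_dec _ _ hxy) => h.
- by apply: Rlt_le; apply: ln_increasing.
- rewrite h; apply: Rle_refl.
Qed.

Theorem theorem15 :
  exists c : R, forall (T : finType) (w : nat -> T) (A : R),
    is_appearance_constant w A ->
    forall n : nat, (2 <= n)%nat ->
      exists S : {set 'I_n},
        string_attractor w S /\ (INR #|S| <= c * A * ln (INR n))%R.
Proof.
exists 12%R => T w A [HA _] n Hn.
have A1 : (1 <= A)%R.
  have [p [_ Hp]] := HA 1%N 0%N isT.
  rewrite INR_addn /= in Hp.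
  have := pos_INR p. lra.
set K := trunc_log 2 n.
have [Hup1 Hup2] := archimed (2 * A).
have upos : (0 <= up (2 * A))%Z.
  apply: le_IZR; lra.
set J := Z.to_nat (up (2 * A)).
have HJ : INR J = IZR (up (2 * A)).
  by rewrite INR_IZR_INZ /J Z2Nat.id.
destruct n as [|n'] => //.
set S := [set x : 'I_n'.+1 | [exists k : 'I_K.+1, exists j : 'I_J,
            (x : nat) == j * expn 2 k]].
exists S; split.
- move=> i len Hlen Hi.
  pose P := fun p => [forall k : 'I_len, w (i + k) == w (p + k)].
  have exP : exists p, P p by exists i; apply/forallP => k.
  have [p0 [Hsf0 Hb0]] := HA len i Hlen.
  have P0 : P p0 by apply/forallP => k; apply/eqP; apply: Hsf0.
  case: (ex_minnP exP) => pm Ppm Hmin.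
  have pm_i : (pm <= i)%nat by apply: Hmin; apply/forallP.
  have pm_p0 : (pm <= p0)%nat by apply: Hmin.
  exists pm; split.
  + lia.
  + move=> k Hk. exact: (eqP (forallP Ppm (Ordinal Hk))).
  + set k := trunc_log 2 len.
    have /andP [Hd1 Hd2] := trunc_log_bounds (isT : (1 < 2)%nat) Hlen.
    rewrite -/k in Hd1 Hd2.
    set d := (expn 2 k) in Hd1 Hd2.
    have dpos : (0 < d)%nat by rewrite expn_gt0.
    rewrite expnS -/d in Hd2.
    set j := ((pm + d - 1) %/ d)%nat.
    have Hs1 : (pm <= j * d)%nat.
      have := divn_eq (pm + d - 1) d; have := ltn_pmod (pm + d - 1) dpos.
      rewrite -/j; lia.
    have Hs2 : (j * d < pm + d)%nat.
      have := leq_divM (pm + d - 1) d. rewrite -/j; lia.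
    have sn : (j * d < n'.+1)%nat by lia.
    have kK : (k < K.+1)%nat by rewrite ltnS; apply: leq_trunc_log; lia.
    have jJ : (j < J)%nat.
      apply: INR_ltn.
      have e1 : (INR (j * d) < INR (p0 + len))%R by apply: lt_INR; apply/ltP; lia.
      have e2 : (INR len < INR (2 * d))%R by apply: lt_INR; apply/ltP; lia.
      rewrite INR_muln in e1; rewrite INR_muln in e2.
      have dp : (0 < INR d)%R by apply: lt_0_INR; apply/ltP.
      have e3 : (INR j * INR d < (2 * A) * INR d)%R.
        simpl in e2. nra.
      have : (INR j < 2 * A)%R.
        apply: (Rmult_lt_reg_r (INR d)) => //.
      rewrite HJ; lra.
    exists (Ordinal sn); last by rewrite /=; lia.
    rewrite inE; apply/existsP; exists (Ordinal kK); apply/existsP.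
    by exists (Ordinal jJ).
- have sub : S \subset [set (inord ((x.2 : nat) * expn 2 x.1) : 'I_n'.+1) | x : 'I_K.+1 * 'I_J in [set: 'I_K.+1 * 'I_J]].
    apply/subsetP => x; rewrite inE => /existsP [k /existsP [j /eqP Hx]].
    apply/imsetP; exists (k, j); first by rewrite inE.
    apply: val_inj; rewrite /= inordK -Hx //.
  have cardS : (#|S| <= K.+1 * J)%nat.
    apply: (leq_trans (subset_leq_card sub)).
    apply: (leq_trans (leq_imset_card _ _)).
    by rewrite cardsT card_prod !card_ord.
  have HK1 : (1 <= K)%nat by rewrite /K trunc_log_gt0.
  have HK2 : (expn 2 K <= n'.+1)%nat by apply: trunc_logP.
  have lnK : (INR K * ln 2 <= ln (INR n'.+1))%R.
    rewrite -ln_pow; last lra.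
    have : (INR (expn 2 K) <= INR n'.+1)%R by apply: INR_leq.
    rewrite INR_expn /= => h.
    apply: ln_le' => //.
    apply: pow_lt; lra.
  have l2 := ln_lt_2.
  have Kr : (1 <= INR K)%R by have := INR_leq 1 K HK1.
  have e1 : (INR K.+1 <= 4 * ln (INR n'.+1))%R.
    rewrite S_INR. nra.
  have e2 : (INR J <= 3 * A)%R by lra.
  have hc := INR_leq _ _ cardS.
  eapply Rle_trans; first exact: hc.
  rewrite INR_muln.
  have : (INR K.+1 * INR J <= (4 * ln (INR n'.+1)) * (3 * A))%R.
    apply: Rmult_le_compat => //; apply: pos_INR.
  lra.
Qed.
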